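(* Let $d,n,k\ge1$, let $x_0,x_1,\dots,x_n\in\mathbb{R}^d$, and let $T_1,\dots,T_k:\mathbb{R}^d\to\mathbb{R}^d$ be maps. Define $V=\operatorname{span}\{T_1(x_0)-x_0,\dots,T_k(x_0)-x_0\}$, and for each $i\in\{1,\dots,n\}$ let $z_i$ be the orthogonal projection of $x_i-x_0$ onto $V^\perp$. Let $M^*$ be the minimizer of $$\min_M \tfrac12\|M\|^2 \quad\text{subject to}\quad z_i^T M z_i\ge 2\ \ \forall i\in\{1,\dots,n\},\quad M\succeq 0.$$ Then $M^*$ is the minimizer of $$\min_M \tfrac12\|M\|^2 \quad\text{subject to}\quad \begin{cases}(x_i-x_0)^T M (x_i-x_0)\ge 2 & \forall i\in\{1,\dots,n\},\\ (T_j(x_0)-x_0)^T M (T_j(x_0)-x_0)=0 & \forall j\in\{1,\dots,k\},\\ M\succeq 0.\end{cases}$$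
   Context: $M$ ranges over real $d\times d$ matrices; $\|M\|$ is the Frobenius norm, $\|M\|^2=\sum_{ij}M_{ij}^2$; $M\succeq 0$ means $M$ is symmetric positive semidefinite. $V^\perp$ is the orthogonal complement of $V$ in $\mathbb{R}^d$ with respect to the standard inner product. *)

(* Defs.v *)
From HB Require Import structures.
From mathcomp Require Import all_boot all_order all_algebra.
From mathcomp Require Import reals.
Set Implicit Arguments. Unset Strict Implicit. Unset Printing Implicit Defensive.
Import Order.TTheory GRing.Theory Num.Theory.
Local Open Scope ring_scope.

Section Defs.
Variables (R : realType) (d : nat).

Definition dotp (u v : 'rV[R]_d) : R := (u *m v^T) 0 0.

Definition qform (M : 'M[R]_d) (u : 'rV[R]_d) : R := (u *m M *m u^T) 0 0.

Definition frob2 (M : 'M[R]_d) : R := \sum_(i < d) \sum_(j < d) M i j ^+ 2.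

Definition half_frob2 (M : 'M[R]_d) : R := frob2 M / 2.

Definition psd (M : 'M[R]_d) : Prop :=
  M^T = M /\ forall u : 'rV[R]_d, 0 <= qform M u.

Definition span_of (k : nat) (vs : 'I_k -> 'rV[R]_d) (v : 'rV[R]_d) : Prop :=
  (v <= \matrix_(j < k) vs j)%MS.

Definition orth_compl (W : 'rV[R]_d -> Prop) (u : 'rV[R]_d) : Prop :=
  forall w, W w -> dotp u w = 0.

Definition is_orth_proj (W : 'rV[R]_d -> Prop) (v z : 'rV[R]_d) : Prop :=
  W z /\ forall w, W w -> dotp (v - z) w = 0.

Definition is_minimizer (F : 'M[R]_d -> Prop) (f : 'M[R]_d -> R) (M : 'M[R]_d) : Prop :=
  F M /\ forall M', F M' -> f M <= f M'.

Definition is_unique_minimizer (F : 'M[R]_d -> Prop) (f : 'M[R]_d -> R) (M : 'M[R]_d) : Prop :=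
  is_minimizer F f M /\ forall M', is_minimizer F f M' -> M' = M.

End Defs.

(* Main.v *)
Require Import Defs.
From HB Require Import structures.
From mathcomp Require Import all_boot all_order all_algebra.
From mathcomp Require Import reals.
From mathcomp Require Import ring lra.
Set Implicit Arguments. Unset Strict Implicit. Unset Printing Implicit Defensive.
Import Order.TTheory GRing.Theory Num.Theory.
Local Open Scope ring_scope.

Section H.
Variables (R : realType) (d : nat).
Implicit Types (M A B P : 'M[R]_d) (u v w : 'rV[R]_d).

Lemma e00T (A : 'M[R]_1) : A 0 0 = A^T 0 0.
Proof. by rewrite mxE. Qed.

Lemma e00D (A B : 'M[R]_1) : (A + B) 0 0 = A 0 0 + B 0 0.
Proof. by rewrite mxE. Qed.
Lemma e00Z a (A : 'M[R]_1) : (a *: A) 0 0 = a * A 0 0.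
Proof. by rewrite mxE. Qed.

Lemma sqnorm_eq0 u : (u *m u^T) 0 0 = 0 -> u = 0.
Proof.
rewrite mxE (eq_bigr (fun i => u 0 i ^+ 2)) => [H|i _]; last by rewrite mxE expr2.
apply/rowP => j; rewrite mxE; apply/eqP; rewrite -sqrf_eq0; apply/eqP.
by apply: (psumr_eq0P _ H) => // i _; exact: sqr_ge0.
Qed.

Lemma qform_sym M u w : M^T = M -> (u *m M *m w^T) 0 0 = (w *m M *m u^T) 0 0.
Proof. by move=> HM; rewrite e00T !trmx_mul trmxK HM mulmxA. Qed.

Lemma real_lem (a b : R) : 0 <= b -> (forall t, 0 <= t * a * 2 + t ^+ 2 * b) -> a = 0.
Proof.
move=> hb H; set t := - a / (b + 1).
have ht : t * (b + 1) = - a by rewrite /t mulrVK ?unitfE //; lra.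
have := H t; nra.
Qed.

Lemma psd_kill M v : psd M -> qform M v = 0 -> v *m M = 0.
Proof.
case=> HMs HMp Hv.
have Ha : forall u, (v *m M *m u^T) 0 0 = 0.
  move=> u; apply: (real_lem (HMp u)) => t.
  have := HMp (v + t *: u); rewrite /qform linearD linearZ /=.
  rewrite !mulmxDl !mulmxDr -!scalemxAl -!scalemxAr.
  rewrite !e00D !e00Z (qform_sym u v HMs).
  rewrite /qform in Hv; rewrite Hv; nra.
apply: sqnorm_eq0; exact: Ha.
Qed.

Lemma frob2_ge0 A : 0 <= frob2 A.
Proof. by apply: sumr_ge0 => i _; apply: sumr_ge0 => j _; exact: sqr_ge0. Qed.

Lemma frob2_eq0 A : frob2 A = 0 -> A = 0.
Proof.
move=> H; apply/matrixP => i j; rewrite mxE.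
have Hi := psumr_eq0P (fun i _ => sumr_ge0 _ (fun j _ => sqr_ge0 (A i j))) H.
have h : A i j ^+ 2 = 0.
  by apply: (psumr_eq0P _ (Hi i isT)) => // k _; exact: sqr_ge0.
by apply/eqP; rewrite -sqrf_eq0 h.
Qed.

Lemma frob2_tr A : frob2 A = \tr (A *m A^T).
Proof.
rewrite /frob2 /mxtrace; apply: eq_bigr => i _; rewrite mxE.
by apply: eq_bigr => j _; rewrite !mxE expr2.
Qed.

Lemma parallelogram A B :
  4 * frob2 ((2^-1) *: (A + B)) + frob2 (A - B) = 2 * frob2 A + 2 * frob2 B.
Proof.
rewrite /frob2 !mulr_sumr -!big_split /=; apply: eq_bigr => i _.
rewrite !mulr_sumr -!big_split /=; apply: eq_bigr => j _.
rewrite !mxE; by field.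
Qed.

Lemma strict (F : 'M[R]_d -> Prop)
  (Fmid : forall A B, F A -> F B -> F (2^-1 *: (A + B))) A B :
  is_minimizer F (@half_frob2 R d) A -> F B ->
  half_frob2 B <= half_frob2 A -> B = A.
Proof.
case=> FA Amin FB hBA.
have := Amin _ (Fmid _ _ FA FB); rewrite /half_frob2 => hm.
move: hBA; rewrite /half_frob2 => hBA.
have := parallelogram A B; have := frob2_ge0 (A - B) => h0 hp.
have : frob2 (A - B) = 0 by lra.
by move/frob2_eq0/eqP; rewrite subr_eq0 => /eqP.
Qed.

Lemma frob2_proj M P : M^T = M -> P^T = P -> P *m P = P ->
  frob2 (P *m M *m P) <= frob2 M.
Proof.
move=> HM HP HPP.
set N := P *m M *m P.
have HN : N^T = N by rewrite /N !trmx_mul HM HP mulmxA.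
set t := \tr (M *m P *m M *m P).
have h1 : \tr (N *m N) = t.
  rewrite /N !mulmxA -(mulmxA (P *m M) P P) HPP -!mulmxA mxtrace_mulC !mulmxA.
  by rewrite -(mulmxA (M *m P *m M) P P) HPP.
have h2 : \tr (M *m N) = t by rewrite /N /t !mulmxA.
have h3 : \tr (N *m M) = t by rewrite /N mxtrace_mulC /t !mulmxA.
have : frob2 M = frob2 N + frob2 (M - N).
  rewrite !frob2_tr HM HN linearB /= HN mulmxBl !mulmxBr !linearB /=.
  rewrite HM h1 h2 h3; ring.
have := frob2_ge0 (M - N); lra.
Qed.

End H.


Section P.
Variables (R : realType) (d k : nat) (W : 'M[R]_(k, d)).

Definition Vb : 'M[R]_(\rank W, d) := row_base W.
Definition Gm : 'M[R]_(\rank W) := Vb *m Vb^T.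
Definition Qm : 'M[R]_d := Vb^T *m invmx Gm *m Vb.
Definition Pm : 'M[R]_d := 1%:M - Qm.

Lemma Gm_unit : Gm \in unitmx.
Proof.
rewrite -row_free_unit; apply: inj_row_free => v Hv.
have : v *m Vb = 0.
  apply: sqnorm_eq0; by rewrite trmx_mul mulmxA -(mulmxA v) -/Gm Hv mul0mx mxE.
move=> h; apply: (row_free_inj (row_base_free W)); rewrite /= -/Vb h.
by rewrite mul0mx.
Qed.

Lemma Gm_tr : Gm^T = Gm.
Proof. by rewrite /Gm trmx_mul trmxK. Qed.

Lemma VbQ : Vb *m Qm = Vb.
Proof.
rewrite /Qm (mulmxA Vb (Vb^T *m _) Vb) (mulmxA Vb Vb^T) -/Gm.
by rewrite (mulmxV Gm_unit) mul1mx.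
Qed.

Lemma Qm_tr : Qm^T = Qm.
Proof.
rewrite /Qm (trmx_mul (Vb^T *m invmx Gm) Vb) (trmx_mul Vb^T (invmx Gm)) trmxK.
by rewrite trmx_inv Gm_tr mulmxA.
Qed.

Lemma QVb : Qm *m Vb^T = Vb^T.
Proof. by rewrite -Qm_tr -trmx_mul VbQ. Qed.

Lemma QQ : Qm *m Qm = Qm.
Proof. by rewrite {1}/Qm -mulmxA VbQ. Qed.

Lemma Pm_tr : Pm^T = Pm.
Proof. by rewrite /Pm linearB /= trmx1 Qm_tr. Qed.

Lemma PP : Pm *m Pm = Pm.
Proof. by rewrite /Pm mulmxBl !mulmxBr !mul1mx !mulmx1 QQ subrr subr0. Qed.

Lemma VbP : Vb *m Pm = 0.
Proof. by rewrite /Pm mulmxBr mulmx1 VbQ subrr. Qed.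

Lemma W_sub_Vb : (W <= Vb)%MS.
Proof. by rewrite /Vb eq_row_base. Qed.

Lemma Vb_sub_W : (Vb <= W)%MS.
Proof. by rewrite /Vb eq_row_base. Qed.

Lemma WP : W *m Pm = 0.
Proof.
have -> : W *m Pm = (W *m @pinvmx _ (\rank W) d Vb) *m (Vb *m Pm).
  by rewrite mulmxA (mulmxKpV W_sub_Vb).
by rewrite VbP mulmx0.
Qed.

Lemma Pfix (u : 'rV[R]_d) : u *m Vb^T = 0 -> u *m Pm = u.
Proof. by move=> h; rewrite /Pm mulmxBr mulmx1 /Qm (mulmxA u (Vb^T *m _) Vb) (mulmxA u Vb^T) h !mul0mx subr0. Qed.

Lemma PVb (u : 'rV[R]_d) : u *m Pm *m Vb^T = 0.
Proof. by rewrite /Pm mulmxBr mulmx1 mulmxBl -mulmxA QVb subrr. Qed.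

Lemma Pker (u : 'rV[R]_d) : u *m Pm = 0 -> (u <= W)%MS.
Proof.
move=> h.
have -> : u = u *m Qm.
  by move: h; rewrite /Pm mulmxBr mulmx1 => /eqP; rewrite subr_eq0 => /eqP.
rewrite /Qm mulmxA; apply: submx_trans (submxMl _ _) Vb_sub_W.
Qed.

Lemma sub_W_kill (M : 'M[R]_d) (u : 'rV[R]_d) : W *m M = 0 -> (u <= W)%MS -> u *m M = 0.
Proof. by move=> h hu; rewrite -(mulmxKpV hu) -(mulmxA (u *m pinvmx W) W M) h mulmx0. Qed.

Lemma orth_Vb (u : 'rV[R]_d) : (forall w, (w <= W)%MS -> dotp u w = 0) -> u *m Vb^T = 0.
Proof.
move=> h; apply/rowP => r.
rewrite [RHS]mxE -(h (row r Vb) (submx_trans (row_sub r Vb) Vb_sub_W)).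
rewrite /dotp !mxE; apply: eq_bigr => s _; by rewrite !mxE.
Qed.

Lemma P_orth (u w : 'rV[R]_d) : (w <= W)%MS -> dotp (u *m Pm) w = 0.
Proof.
move=> hw; rewrite /dotp -(mulmxKpV (submx_trans hw W_sub_Vb)) trmx_mul.
by rewrite mulmxA PVb mul0mx mxE.
Qed.

End P.

Section P2.
Variables (R : realType) (d k : nat) (W : 'M[R]_(k, d)).
Lemma P_kill (y : 'rV[R]_d) :
  (forall w : 'rV[R]_d, (forall v, (v <= W)%MS -> dotp w v = 0) -> dotp y w = 0) ->
  y *m Pm W = 0.
Proof.
move=> h; apply: sqnorm_eq0.
have := h (y *m Pm W) (fun v hv => P_orth y hv).
have E : (y *m Pm W)^T = Pm W *m y^T by rewrite trmx_mul Pm_tr.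
rewrite /dotp E mulmxA => <-.
by rewrite mulmxA -(mulmxA y (Pm W) (Pm W)) PP.
Qed.
End P2.

Lemma e00_0 (R : realType) : (0 : 'M[R]_1) 0 0 = 0.
Proof. by rewrite mxE. Qed.

Lemma qform_add_kill (R : realType) (d : nat) (M : 'M[R]_d) (z e : 'rV[R]_d) :
  M^T = M -> e *m M = 0 -> qform M (z + e) = qform M z.
Proof.
move=> hMs he.
rewrite /qform mulmxDl he.
rewrite addr0.
rewrite linearD /= mulmxDr e00D.
rewrite (qform_sym z e hMs) he mul0mx e00_0.
by rewrite addr0.
Qed.


Unset Implicit Arguments.

Lemma qform_mid (R : realType) (d : nat) c (A B : 'M[R]_d) u :
  qform (c *: (A + B)) u = c * (qform A u + qform B u).
Proof.
rewrite /qform -scalemxAr -scalemxAl mulmxDr mulmxDl.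
by rewrite e00Z e00D.
Qed.

Lemma psd_mid (R : realType) (d : nat) c (A B : 'M[R]_d) :
  0 <= c -> psd A -> psd B -> psd (c *: (A + B)).
Proof.
move=> hc [hA1 hA2] [hB1 hB2]; split.
  by rewrite linearZ linearD /= hA1 hB1.
by move=> u; rewrite qform_mid; apply: mulr_ge0 => //; apply: addr_ge0.
Qed.

Theorem theorem3 (R : realType) (d n k : nat)
  (hd : (0 < d)%N) (hn : (0 < n)%N) (hk : (0 < k)%N)
  (x0 : 'rV[R]_d) (x : 'I_n -> 'rV[R]_d)
  (T : 'I_k -> 'rV[R]_d -> 'rV[R]_d)
  (z : 'I_n -> 'rV[R]_d)
  (hz : forall i : 'I_n,
      is_orth_proj (orth_compl (span_of (fun j => T j x0 - x0))) (x i - x0) (z i))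
  (Mstar : 'M[R]_d)
  (hM : is_minimizer
          (fun M => (forall i : 'I_n, qform M (z i) >= 2) /\ psd M)
          (@half_frob2 R d) Mstar) :
  is_unique_minimizer
    (fun M => (forall i : 'I_n, qform M (x i - x0) >= 2) /\
              (forall j : 'I_k, qform M (T j x0 - x0) = 0) /\ psd M)
    (@half_frob2 R d) Mstar.
Proof.
set W := \matrix_(j < k) (T j x0 - x0).
have hzO : forall i (w : 'rV[R]_d), (w <= W)%MS -> dotp (z i) w = 0.
  by move=> i; case: (hz i).
have hzP : forall i (w : 'rV[R]_d), (forall v, (v <= W)%MS -> dotp w v = 0) ->
    dotp (x i - x0 - z i) w = 0.
  by move=> i; case: (hz i).
set P := Pm W.
have hzfix : forall i, z i *m P = z i by move=> i; apply: Pfix; apply: orth_Vb; exact: hzO.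
have hyz : forall i, (x i - x0 - z i <= W)%MS.
  by move=> i; apply: (Pker (W:=W)); apply: P_kill; exact: hzP.
have shift : forall M, M^T = M -> W *m M = 0 -> forall i,
    qform M (x i - x0) = qform M (z i).
  move=> M hMs hWM i; have he := sub_W_kill hWM (hyz i).
  have -> : x i - x0 = z i + (x i - x0 - z i) by rewrite [RHS]addrCA subrr addr0.
  exact: qform_add_kill.
have Wkill : forall M : 'M[R]_d, (forall j, (T j x0 - x0) *m M = 0) -> W *m M = 0.
  by move=> M h; apply/row_matrixP => j; rewrite row_mul rowK row0 h.
have kill : forall M : 'M[R]_d, W *m M = 0 -> forall j, (T j x0 - x0) *m M = 0.
  by move=> M h j; have := congr1 (row j) h; rewrite row_mul rowK row0.
set F1 := fun M : 'M[R]_d => (forall i : 'I_n, qform M (z i) >= 2) /\ psd M.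
have Fmid : forall A B, F1 A -> F1 B -> F1 (2^-1 *: (A + B)).
  move=> A B [hA1 hA2] [hB1 hB2]; split.
    move=> i; rewrite qform_mid; have := hA1 i; have := hB1 i; lra.
  by apply: psd_mid => //; rewrite invr_ge0.
have F2F1 : forall M, ((forall i : 'I_n, qform M (x i - x0) >= 2) /\
              (forall j : 'I_k, qform M (T j x0 - x0) = 0) /\ psd M) -> F1 M.
  move=> M [h1 [h2 h3]]; have hW := Wkill M (fun j => psd_kill h3 (h2 j)).
  by split=> // i; rewrite -(shift M h3.1 hW i); exact: h1.
have hMc := hM; case: hMc => [[hM1 hM2] hMmin].
set N := P *m Mstar *m P.
have qformN : forall u, qform N u = qform Mstar (u *m P).
  by move=> u; rewrite /qform /N trmx_mul Pm_tr !mulmxA.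
have FN : F1 N.
  split.
    by move=> i; rewrite qformN hzfix; exact: hM1.
  split; last by move=> u; rewrite qformN; exact: hM2.2.
  by rewrite /N !trmx_mul hM2.1 Pm_tr mulmxA.
have hN : N = Mstar.
  apply: (strict Fmid hM FN); rewrite /half_frob2.
  have := frob2_proj hM2.1 (@Pm_tr R d k W) (@PP R d k W); rewrite -/P -/N; lra.
have hWM : W *m Mstar = 0 by rewrite -hN /N !mulmxA WP !mul0mx.
have F2M : (forall i : 'I_n, qform Mstar (x i - x0) >= 2) /\
              (forall j : 'I_k, qform Mstar (T j x0 - x0) = 0) /\ psd Mstar.
  split; first by move=> i; rewrite (shift _ hM2.1 hWM); exact: hM1.
  split=> // j; by rewrite /qform (kill _ hWM j) mul0mx mxE.
split.
  split=> // M' h; exact: hMmin (F2F1 _ h).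
move=> M' [h1 h2].
apply: (strict Fmid hM (F2F1 _ h1)); exact: h2 _ F2M.
Qed.
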